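(* Let $G$ be a $\tau$-regular graph with node set $V=S\cup T$ ($S,T$ nonempty, disjoint) and node features $X\in\mathbb{R}^{|V|\times d}$ with nonnegative entries. Consider the two-patch PatchGT computation: a node-level GNN $f^{\mathrm{GNN}}$ of $L$ layers $H_{l+1}=\sigma(H_lW_{1l}^\top+AH_lW_{2l}^\top)$ ($\sigma$ = ReLU, $\|W_{1l}\|_{1\to1},\|W_{2l}\|_{1\to1}\le1$), patch representations $z_S=\frac{1}{|V|}\sum_{i\in S}f_i^{\mathrm{GNN}}(X)$, $z_T=\frac{1}{|V|}\sum_{i\in T}f_i^{\mathrm{GNN}}(X)$, and a patch-level layer $g_T^{\mathrm{GNN}}(X)=\sigma(z_TW_1^\top+z_SW_2^\top)$ with $W_1,W_2\in\mathbb{R}^{d\times d}$. Define $\eta_{S\to T}=\max_{\alpha}\|g_T^{\mathrm{GNN}}(X+\alpha)-g_T^{\mathrm{GNN}}(X)\|_1$ over all $\alpha$ with $|\alpha_{ij}|\le\epsilon$ for $i\in S$ and $\alpha_{ij}=0$ for $i\in T$, and $\eta_{T\to T}=\max_{\beta}\|g_T^{\mathrm{GNN}}(X+\beta)-g_T^{\mathrm{GNN}}(X)\|_1$ over all $\beta$ with $|\beta_{ij}|\le\epsilon$ for $i\in T$ and $\beta_{ij}=0$ for $i\in S$ (with $\epsilon>0$). Then for every $\delta>0$ there exist parameters $(W_{1l},W_{2l})_l$, $W_1$, $W_2$ such that $\big|\eta_{S\to T}/\eta_{T\to T}-1\big|<\delta$; i.e. the ratio $\eta_{S\to T}/\eta_{T\to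 T}$ can be made arbitrarily close to $1$.
   Context: $f_i^{\mathrm{GNN}}(X)\in\mathbb{R}^{1\times d}$ denotes the row of the final layer output $H_L$ at node $i$, computed from input features $X$. For $W\in\mathbb{R}^{d\times d}$, $\|W\|_{1\to1}=\max_k\sum_j|W_{jk}|$. For a row vector $y$, $\|y\|_1=\sum_j|y_j|$. *)

(* Defs.v *)
From HB Require Import structures.
From mathcomp Require Import all_boot all_order all_algebra.
From mathcomp Require Import boolp classical_sets reals.
Set Implicit Arguments. Unset Strict Implicit. Unset Printing Implicit Defensive.
Import Order.TTheory GRing.Theory Num.Theory.
Local Open Scope ring_scope.

Section PatchGT.
Variable R : realType.

Definition simple_graph n (e : rel 'I_n) : Prop :=
  symmetric e /\ irreflexive e.
Definition regular n (e : rel 'I_n) (tau : nat) : Prop :=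
  forall i : 'I_n, #|[set j | e i j]| = tau.

Definition adjacency n (e : rel 'I_n) : 'M[R]_n := \matrix_(i, j) (e i j)%:R.

Definition norm11 d (W : 'M[R]_d) : R :=
  \big[Num.max/0]_(k < d) \sum_(j < d) `|W j k|.

Definition norm1 d (y : 'rV[R]_d) : R := \sum_(j < d) `|y 0 j|.

Definition relu m p (M : 'M[R]_(m, p)) : 'M[R]_(m, p) := map_mx (fun x => Num.max x 0) M.

Fixpoint gnn n d (A : 'M[R]_n) (W1s W2s : nat -> 'M[R]_d) (l : nat)
    (X : 'M[R]_(n, d)) : 'M[R]_(n, d) :=
  match l with
  | 0 => X
  | l'.+1 => let H := gnn A W1s W2s l' X in
             relu (H *m (W1s l')^T + A *m H *m (W2s l')^T)
  end.

Definition patch_rep n d (H : 'M[R]_(n, d)) (P : {set 'I_n}) : 'rV[R]_d :=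
  (n%:R)^-1 *: \sum_(i in P) row i H.

Definition gT n d (A : 'M[R]_n) (W1s W2s : nat -> 'M[R]_d) (L : nat)
    (W1 W2 : 'M[R]_d) (S T : {set 'I_n}) (X : 'M[R]_(n, d)) : 'rV[R]_d :=
  let H := gnn A W1s W2s L X in
  relu (patch_rep H T *m W1^T + patch_rep H S *m W2^T).

Definition perturb_on n d (P : {set 'I_n}) (eps : R) (a : 'M[R]_(n, d)) : Prop :=
  forall i j, (i \in P -> `|a i j| <= eps) /\ (i \notin P -> a i j = 0).

Definition eta_to_T n d (A : 'M[R]_n) (W1s W2s : nat -> 'M[R]_d) (L : nat)
    (W1 W2 : 'M[R]_d) (S T P : {set 'I_n}) (eps : R) (X : 'M[R]_(n, d)) : R :=
  sup [set norm1 (gT A W1s W2s L W1 W2 S T (X + a) - gT A W1s W2s L W1 W2 S T X)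
       | a in perturb_on P eps].

End PatchGT.

(* Main.v *)
Require Import Defs.
From HB Require Import structures.
From mathcomp Require Import all_boot all_order all_algebra.
From mathcomp Require Import boolp classical_sets reals ring lra.
Import Order.TTheory GRing.Theory Num.Theory.
Local Open Scope ring_scope.

Lemma sup_max (R : realType) (E : set R) x : E x -> ubound E x -> sup E = x.
Proof.
move=> Ex ub; apply/le_anti/andP; split.
  by apply: ge_sup => //; exists x.
by apply: sup_upper_bound => //; split; [exists x | exists x].
Qed.

Lemma mx_l (R: realType) (x y : R): y <= x -> Num.max x y = x.
Proof. move=> h. change (Order.max x y = x). by rewrite max_l. Qed.
Lemma mx_r (R: realType) (x y : R): x <= y -> Num.max x y = y.
Proof. move=> h. change (Order.max x y = y). by rewrite max_r. Qed.

Lemma mx_ge0 (R: realType) (x : R): 0 <= Num.max x 0.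
Proof. case: (boolP (0 <= x)) => h; first by rewrite mx_l. by rewrite mx_r // ltW // ltNge. Qed.

Definition phi {R : realType} L (x : R) := iter L (fun y => Num.max y 0) x.

Lemma phi_id (R : realType) L (x : R) : 0 <= x -> phi L x = x.
Proof. by move=> hx; elim: L => //= L IH; rewrite /phi /= -/(phi L x) IH; apply: mx_l. Qed.

Lemma relu_lip (R : realType) (x z : R) : 0 <= x -> `|Num.max z 0 - x| <= `|z - x|.
Proof.
move=> hx; case: (boolP (0 <= z)) => hz; first by rewrite mx_l.
rewrite -ltNge in hz.
rewrite mx_r ?ltW // sub0r normrN ger0_norm // ler0_norm; last first.
  by rewrite subr_le0 (le_trans (ltW hz)).
by rewrite opprB ltrDl oppr_gt0.
Qed.

Lemma phi_lip (R : realType) L (x y : R) : 0 <= x -> `|phi L y - x| <= `|y - x|.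
Proof.
move=> hx; elim: L => //= L IH; rewrite /phi /= -/(phi L y).
by apply: le_trans IH; apply: relu_lip.
Qed.

Lemma gnn_entry (R : realType) n d (A : 'M[R]_n) L (M : 'M[R]_(n,d)) i j :
  gnn A (fun _ => 1%:M) (fun _ => 0) L M i j = phi L (M i j).
Proof.
elim: L i j => //= L IH i j.
by rewrite /relu mxE trmx0 mulmx0 addr0 trmx1 mulmx1 IH.
Qed.

Lemma gT_entry (R : realType) n d (A : 'M[R]_n) L (a b : R) S T (M : 'M[R]_(n,d)) j :
  gT A (fun _ => 1%:M) (fun _ => 0) L a%:M b%:M S T M 0 j =
  Num.max (n%:R^-1 * (a * \sum_(i in T) phi L (M i j) + b * \sum_(i in S) phi L (M i j))) 0.
Proof.
rewrite /gT /relu mxE !tr_scalar_mx !mul_mx_scalar /patch_rep !mxE !summxE.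
rewrite mulrDr; congr (Num.max (_ + _) 0).
  rewrite mulrCA; congr (_ * (_ * _)); apply: eq_bigr => i _; by rewrite !mxE gnn_entry.
rewrite mulrCA; congr (_ * (_ * _)); apply: eq_bigr => i _; by rewrite !mxE gnn_entry.
Qed.

Lemma eta_val (R : realType) n d (g : 'M[R]_(n,d) -> 'rV[R]_d) L (P Q : {set 'I_n})
    (al be eps : R) (X : 'M[R]_(n,d)) :
  (forall i, i \in Q -> i \notin P) -> 0 <= al -> 0 <= be -> 0 < eps ->
  (forall i j, 0 <= X i j) ->
  (forall M j, g M 0 j = Num.max (n%:R^-1 * (al * \sum_(i in P) phi L (M i j)
                                        + be * \sum_(i in Q) phi L (M i j))) 0) ->
  sup [set norm1 (g (X + a) - g X) | a in perturb_on P eps] =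
  d%:R * (n%:R^-1 * al * #|P|%:R * eps).
Proof.
move=> hQ hal hbe heps hX hg.
have hv : forall j, g X 0 j = n%:R^-1 * (al * \sum_(i in P) X i j + be * \sum_(i in Q) X i j).
  move=> j; rewrite hg mx_l.
    by congr (_ * (al * _ + be * _)); apply: eq_bigr => i _; rewrite phi_id.
  apply: mulr_ge0; first by rewrite invr_ge0 ler0n.
  by apply: addr_ge0; apply: mulr_ge0 => //; apply: sumr_ge0 => i _; rewrite phi_id.
have hv0 : forall j, 0 <= g X 0 j by move=> j; rewrite hg; apply: mx_ge0.
apply: sup_max.
- exists (\matrix_(i, j) if i \in P then eps else 0).
    move=> i j; rewrite mxE; split => hi; first by rewrite hi ger0_norm // ltW.
    by rewrite (negbTE hi).
  rewrite /norm1; transitivity (\sum_(j < d) (n%:R^-1 * al * #|P|%:R * eps)); last first.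
    by rewrite sumr_const card_ord mulr_natl.
  apply: eq_bigr => j _.
  have hc : 0 <= n%:R^-1 * al * #|P|%:R * eps.
    by rewrite !mulr_ge0 ?invr_ge0 ?ler0n // ltW.
  have e1 : \sum_(i in P) phi L ((X + \matrix_(i, j) if i \in P then eps else 0) i j)
            = \sum_(i in P) X i j + #|P|%:R * eps.
    rewrite (eq_bigr (fun i => X i j + eps)); last first.
      by move=> i hi; rewrite !mxE hi phi_id // addr_ge0 // ltW.
    by rewrite big_split /= sumr_const mulr_natl.
  have e2 : \sum_(i in Q) phi L ((X + \matrix_(i, j) if i \in P then eps else 0) i j)
            = \sum_(i in Q) X i j.
    apply: eq_bigr => i hi; rewrite !mxE (negbTE (hQ i hi)) addr0 phi_id //.
  rewrite !mxE hg e1 e2.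
  have -> : n%:R^-1 * (al * (\sum_(i in P) X i j + #|P|%:R * eps) + be * \sum_(i in Q) X i j)
     = g X 0 j + n%:R^-1 * al * #|P|%:R * eps by rewrite hv; ring.
  by rewrite mx_l ?addr_ge0 // addrAC subrr add0r ger0_norm.
- move=> _ [a ha <-]; rewrite /norm1.
  have hc : 0 <= n%:R^-1 * al by rewrite mulr_ge0 ?invr_ge0 ?ler0n.
  have <- : \sum_(j < d) (n%:R^-1 * al * #|P|%:R * eps) = d%:R * (n%:R^-1 * al * #|P|%:R * eps).
    by rewrite sumr_const card_ord mulr_natl.
  apply: ler_sum => j _; rewrite !mxE hg.
  have e2 : \sum_(i in Q) phi L ((X + a) i j) = \sum_(i in Q) X i j.
    apply: eq_bigr => i hi; rewrite !mxE ((ha i j).2 (hQ i hi)) addr0 phi_id //.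
  rewrite e2; apply: le_trans; first exact: (relu_lip _ _ _ (hv0 j)).
  rewrite hv.
  have -> : n%:R^-1 * (al * \sum_(i in P) phi L ((X + a) i j) + be * \sum_(i in Q) X i j) -
      n%:R^-1 * (al * \sum_(i in P) X i j + be * \sum_(i in Q) X i j) =
      (n%:R^-1 * al) * \sum_(i in P) (phi L ((X + a) i j) - X i j).
    by rewrite sumrB; ring.
  have -> : n%:R^-1 * al * #|P|%:R * eps = (n%:R^-1 * al) * (#|P|%:R * eps) by ring.
  rewrite normrM ger0_norm //; apply: ler_wpM2l => //.
  apply: le_trans; first exact: ler_norm_sum.
  have <- : \sum_(i in P) eps = #|P|%:R * eps by rewrite sumr_const mulr_natl.
  apply: ler_sum => i hi; apply: le_trans; first exact: (phi_lip _ _ _ _ (hX i j)).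
  by rewrite mxE addrAC subrr add0r; exact: ((ha i j).1 hi).
Qed.

Lemma norm11_le (R : realType) d (W : 'M[R]_d) :
  (forall k, \sum_(j < d) `|W j k| <= 1) -> norm11 W <= 1.
Proof.
move=> h; rewrite /norm11; elim/big_ind: _ => //.
move=> x y hx hy; case: (boolP (x <= y)) => hxy; first by rewrite mx_r.
by rewrite mx_l // ltW // ltNge.
Qed.

Theorem theorem5 (R : realType) (n d L tau : nat) (e : rel 'I_n)
    (S T : {set 'I_n}) (X : 'M[R]_(n, d)) (eps delta : R) :
  (0 < d)%N ->
  simple_graph e -> regular e tau ->
  S != finset.set0 -> T != finset.set0 -> S :&: T = finset.set0 -> S :|: T = [set: 'I_n] ->
  (forall i j, 0 <= X i j) ->
  0 < eps -> 0 < delta ->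
  exists (W1s W2s : nat -> 'M[R]_d) (W1 W2 : 'M[R]_d),
    (forall l, (l < L)%N -> norm11 (W1s l) <= 1 /\ norm11 (W2s l) <= 1) /\
    let etaST := eta_to_T (adjacency R e) W1s W2s L W1 W2 S T S eps X in
    let etaTT := eta_to_T (adjacency R e) W1s W2s L W1 W2 S T T eps X in
    0 < etaTT /\ `|etaST / etaTT - 1| < delta.
Proof.
move=> hd _ _ hS hT hST _ hX heps hdelta.
exists (fun _ => 1%:M), (fun _ => 0), (#|S|%:R)%:M, (#|T|%:R)%:M; split.
  move=> l _; split; apply: norm11_le => k.
    rewrite (bigD1 k) //= mxE eqxx normr1 big1 ?addr0 // => j hj.
    by rewrite mxE (negbTE hj) normr0.
  by rewrite big1 ?ler01 // => j _; rewrite mxE normr0.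
have dis : forall i, i \in S -> i \in T -> False.
  move=> i h1 h2; have : i \in S :&: T by rewrite inE h1 h2.
  by rewrite hST inE.
have eST : eta_to_T (adjacency R e) (fun _ => 1%:M) (fun _ => 0) L (#|S|%:R)%:M (#|T|%:R)%:M S T S eps X
   = d%:R * (n%:R^-1 * #|T|%:R * #|S|%:R * eps).
  apply: (eta_val _ _ _ _ _ S T (#|T|%:R) (#|S|%:R)) => //.
  - by move=> i hi; apply/negP => hi'; apply: (dis i).
  - by move=> M j; rewrite gT_entry addrC.
have eTT : eta_to_T (adjacency R e) (fun _ => 1%:M) (fun _ => 0) L (#|S|%:R)%:M (#|T|%:R)%:M S T T eps X
   = d%:R * (n%:R^-1 * #|S|%:R * #|T|%:R * eps).
  apply: (eta_val _ _ _ _ _ T S (#|S|%:R) (#|T|%:R)) => //.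
  - by move=> i hi; apply/negP => hi'; apply: (dis i).
  - by move=> M j; rewrite gT_entry.
cbv zeta; rewrite eST eTT.
have hSp : (0 < #|S|)%N by rewrite card_gt0.
have hTp : (0 < #|T|)%N by rewrite card_gt0.
have hnp : (0 < n)%N by apply: leq_trans hSp _; have := max_card S; rewrite card_ord.
have pos : 0 < d%:R * (n%:R^-1 * #|S|%:R * #|T|%:R * eps).
  by rewrite !mulr_gt0 ?invr_gt0 ?ltr0n.
split => //.
have -> : d%:R * (n%:R^-1 * #|T|%:R * #|S|%:R * eps) = d%:R * (n%:R^-1 * #|S|%:R * #|T|%:R * eps) by ring.
by rewrite divff ?subrr ?normr0 // gt_eqF.
Qed.
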